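(* Let $Q$ be a countable weak-latin quandle and $c$ a circular order on $Q$. Then there is an injective quandle homomorphism $\rho:Q\hookrightarrow\mathrm{Conj}(\mathrm{Homeo}_+(S^1))$, i.e. an injective map with $\rho(r*s)=\rho(s)\circ\rho(r)\circ\rho(s)^{-1}$ for all $r,s\in Q$.
   Context: Quandle: set $Q$ with operation $*$ satisfying $q*q=q$, unique right division, and $(q*r)*s=(q*s)*(r*s)$. $Q$ is weak-latin if for any $q,r\in Q$ there exists $\hat q\in Q$ such that $\hat q*q=\hat q*r$ implies $q=r$. A circular order on $Q$ is $c:Q^3\to\{-1,0,1\}$ with: $c(q_1,q_2,q_3)=0$ iff two entries coincide; $c(q_2,q_3,q_4)-c(q_1,q_3,q_4)+c(q_1,q_2,q_4)-c(q_1,q_2,q_3)=0$; $c(q_1*q,q_2*q,q_3*q)=c(q_1,q_2,q_3)$. Homeomorphisms act on the right; $\mathrm{Conj}(\mathrm{Homeo}_+(S^1))$ is the quandle structure $f*g=g\circ f\circ g^{-1}$ on $\mathrm{Homeo}_+(S^1)$. *)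

(* Defs.v *)
From Stdlib Require Import Reals ZArith.
Open Scope R_scope.

Definition is_quandle {Q : Type} (op : Q -> Q -> Q) : Prop :=
  (forall q, op q q = q) /\
  (forall q r, exists! p, op p q = r) /\
  (forall q r s, op (op q r) s = op (op q s) (op r s)).

(** weak-latin, literally as in the paper *)
Definition weak_latin {Q : Type} (op : Q -> Q -> Q) : Prop :=
  forall q r : Q, exists qh : Q, op qh q = op qh r -> q = r.

Definition countable (Q : Type) : Prop :=
  exists f : Q -> nat, forall x y, f x = f y -> x = y.

Definition circular_order {Q : Type} (op : Q -> Q -> Q) (c : Q -> Q -> Q -> Z) : Prop :=
  (forall q1 q2 q3, c q1 q2 q3 = (-1)%Z \/ c q1 q2 q3 = 0%Z \/ c q1 q2 q3 = 1%Z) /\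
  (forall q1 q2 q3, c q1 q2 q3 = 0%Z <-> (q1 = q2 \/ q2 = q3 \/ q1 = q3)) /\
  (forall q1 q2 q3 q4,
      (c q2 q3 q4 - c q1 q3 q4 + c q1 q2 q4 - c q1 q2 q3)%Z = 0%Z) /\
  (forall q q1 q2 q3, c (op q1 q) (op q2 q) (op q3 q) = c q1 q2 q3).

Definition S1 : Type := { p : R * R | fst p ^ 2 + snd p ^ 2 = 1 }.

Definition S1dist (x y : S1) : R :=
  sqrt ((fst (proj1_sig x) - fst (proj1_sig y)) ^ 2 +
        (snd (proj1_sig x) - snd (proj1_sig y)) ^ 2).

Definition S1_continuous (f : S1 -> S1) : Prop :=
  forall x (eps : R), 0 < eps ->
    exists delta, 0 < delta /\ forall y, S1dist x y < delta -> S1dist (f x) (f y) < eps.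

(** orientation of a triple of points: sign of det(b - a, c - a);
    positive iff (a,b,c) is counterclockwise *)
Definition orient (a b c : S1) : R :=
  let a := proj1_sig a in let b := proj1_sig b in let c := proj1_sig c in
  (fst b - fst a) * (snd c - snd a) - (snd b - snd a) * (fst c - fst a).

Record HomeoPlus : Type := {
  hp_fun : S1 -> S1;
  hp_inv : S1 -> S1;
  hp_inv_l : forall x, hp_inv (hp_fun x) = x;
  hp_inv_r : forall x, hp_fun (hp_inv x) = x;
  hp_cont : S1_continuous hp_fun;
  hp_inv_cont : S1_continuous hp_inv;
  hp_orient : forall a b c, 0 < orient a b c <-> 0 < orient (hp_fun a) (hp_fun b) (hp_fun c)
}.

Definition conj_op (f g : HomeoPlus) : S1 -> S1 :=
  fun x => hp_fun g (hp_fun f (hp_inv g x)).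

(* Main.v *)
Require Import Defs.
From Stdlib Require Import Reals ZArith.
From Stdlib Require Import Lia Lra List Classical ClassicalEpsilon FunctionalExtensionality ProofIrrelevance.
From Stdlib Require Cantor.
Open Scope nat_scope.
Import ListNotations.

Record DLO {T : Type} (lt : T -> T -> Prop) : Prop := {
  dlo_irr : forall x, ~ lt x x;
  dlo_trans : forall x y z, lt x y -> lt y z -> lt x z;
  dlo_tot : forall x y, x <> y -> lt x y \/ lt y x;
  dlo_dense : forall x y, lt x y -> exists z, lt x z /\ lt z y;
  dlo_nomax : forall x, exists y, lt x y;
  dlo_nomin : forall x, exists y, lt y x }.

Definition dec (P : Prop) : bool := if excluded_middle_informative P then true else false.
Lemma dec_true P : dec P = true <-> P.
Proof. unfold dec; destruct (excluded_middle_informative P); split; congruence. Qed.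

Section Between.
Variables (T : Type) (lt : T -> T -> Prop) (H : DLO lt).

Lemma dlo_asym x y : lt x y -> ~ lt y x.
Proof. intros h1 h2. apply (dlo_irr _ H x). eapply dlo_trans; eauto. Qed.

Lemma list_max (l : list T) : l <> [] -> exists m, In m l /\ forall y, In y l -> y = m \/ lt y m.
Proof.
  induction l as [|a l IH]; intros Hn; [congruence|].
  destruct l as [|a' l'].
  - exists a. split; [left; auto|]. intros y [<-|[]]. auto.
  - destruct IH as [m [Hm1 Hm2]]; [discriminate|].
    destruct (classic (a = m)) as [E|E].
    + exists m. split; [right; auto|]. intros y [<-|Hy]; auto.
    + destruct (dlo_tot _ H a m E) as [L|L].
      * exists m. split; [right; auto|]. intros y [<-|Hy]; auto.
      * exists a. split; [left; auto|]. intros y [<-|Hy]; auto.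
        destruct (Hm2 y Hy) as [->|L2]; auto. right. eapply dlo_trans; eauto.
Qed.

Lemma list_min (l : list T) : l <> [] -> exists m, In m l /\ forall y, In y l -> y = m \/ lt m y.
Proof.
  induction l as [|a l IH]; intros Hn; [congruence|].
  destruct l as [|a' l'].
  - exists a. split; [left; auto|]. intros y [<-|[]]. auto.
  - destruct IH as [m [Hm1 Hm2]]; [discriminate|].
    destruct (classic (a = m)) as [E|E].
    + exists m. split; [right; auto|]. intros y [<-|Hy]; auto.
    + destruct (dlo_tot _ H a m E) as [L|L].
      * exists a. split; [left; auto|]. intros y [<-|Hy]; auto.
        destruct (Hm2 y Hy) as [->|L2]; auto. right. eapply dlo_trans; eauto.
      * exists m. split; [right; auto|]. intros y [<-|Hy]; auto.
Qed.

Lemma between (t0 : T) (lo hi : list T) :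
  (forall l h, In l lo -> In h hi -> lt l h) ->
  exists z, (forall l, In l lo -> lt l z) /\ (forall h, In h hi -> lt z h).
Proof.
  intros Hlh.
  destruct lo as [|l0 lo'] eqn:Elo; destruct hi as [|h0 hi'] eqn:Ehi.
  - exists t0; split; intros ? [].
  - destruct (list_min (h0 :: hi')) as [m [Hm1 Hm2]]; [discriminate|].
    destruct (dlo_nomin _ H m) as [z Hz]. exists z. split; [intros ? []|].
    intros h Hh. destruct (Hm2 h Hh) as [->|L]; auto. eapply dlo_trans; eauto.
  - destruct (list_max (l0 :: lo')) as [m [Hm1 Hm2]]; [discriminate|].
    destruct (dlo_nomax _ H m) as [z Hz]. exists z. split; [|intros ? []].
    intros l Hl. destruct (Hm2 l Hl) as [->|L]; auto. eapply dlo_trans; eauto.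
  - destruct (list_max (l0 :: lo')) as [M [HM1 HM2]]; [discriminate|].
    destruct (list_min (h0 :: hi')) as [m [Hm1 Hm2]]; [discriminate|].
    destruct (dlo_dense _ H M m (Hlh _ _ HM1 Hm1)) as [z [Hz1 Hz2]].
    exists z. split.
    + intros l Hl. destruct (HM2 l Hl) as [->|L]; auto. eapply dlo_trans; eauto.
    + intros h Hh. destruct (Hm2 h Hh) as [->|L]; auto. eapply dlo_trans; eauto.
Qed.
End Between.

Section Forth.
Variables (A B : Type) (ltA : A -> A -> Prop) (ltB : B -> B -> Prop)
  (HA : DLO ltA) (HB : DLO ltB).

Definition Good (P : list (A * B)) : Prop :=
  forall x y x' y', In (x, y) P -> In (x', y') P -> (ltA x x' <-> ltB y y').

Lemma Good_eq P x y x' y' : Good P -> In (x, y) P -> In (x', y') P -> (x = x' <-> y = y').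
Proof.
  intros G H1 H2. split.
  - intros <-. destruct (classic (y = y')) as [E|E]; auto.
    exfalso. destruct (dlo_tot _ HB y y' E) as [L|L].
    + apply (dlo_irr _ HA x). apply (G _ _ _ _ H1 H2). auto.
    + apply (dlo_irr _ HA x). apply (G _ _ _ _ H2 H1). auto.
  - intros <-. destruct (classic (x = x')) as [E|E]; auto.
    exfalso. destruct (dlo_tot _ HA x x' E) as [L|L].
    + apply (dlo_irr _ HB y). apply (G _ _ _ _ H1 H2). auto.
    + apply (dlo_irr _ HB y). apply (G _ _ _ _ H2 H1). auto.
Qed.

Lemma forth (b0 : B) P x : Good P -> exists y, Good ((x, y) :: P).
Proof.
  intros G.
  destruct (classic (exists y, In (x, y) P)) as [[y Hy]|Hn].
  - exists y. intros x1 y1 x2 y2 [E1|H1] [E2|H2];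
      try (injection E1 as <- <-); try (injection E2 as <- <-); apply G; auto.
  - set (lo := map snd (filter (fun p => dec (ltA (fst p) x)) P)).
    set (hi := map snd (filter (fun p => dec (ltA x (fst p))) P)).
    destruct (between B ltB HB b0 lo hi) as [z [Hz1 Hz2]].
    { intros l h Hl Hh. unfold lo, hi in *.
      apply in_map_iff in Hl as [[xl yl] [<- Hl]]. apply in_map_iff in Hh as [[xh yh] [<- Hh]].
      apply filter_In in Hl as [Hl Hl']. apply filter_In in Hh as [Hh Hh'].
      apply (proj1 (dec_true _)) in Hl'. apply (proj1 (dec_true _)) in Hh'. simpl in *.
      apply (G _ _ _ _ Hl Hh). exact (dlo_trans _ HA _ _ _ Hl' Hh'). }
    exists z.
    assert (K : forall x' y', In (x', y') P -> (ltA x x' <-> ltB z y') /\ (ltA x' x <-> ltB y' z)).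
    { intros x' y' Hp.
      assert (Hne : x <> x') by (intros <-; apply Hn; eauto).
      destruct (dlo_tot _ HA x x' Hne) as [L|L].
      - assert (Hy : ltB z y').
        { apply Hz2. unfold hi. apply in_map_iff. exists (x', y'). split; auto.
          apply filter_In. split; auto. apply dec_true. auto. }
        split; split; intros; auto.
        + exfalso. eapply (dlo_asym _ _ HA); eauto.
        + exfalso. eapply (dlo_asym _ _ HB); eauto.
      - assert (Hy : ltB y' z).
        { apply Hz1. unfold lo. apply in_map_iff. exists (x', y'). split; auto.
          apply filter_In. split; auto. apply dec_true. auto. }
        split; split; intros; auto.
        + exfalso. eapply (dlo_asym _ _ HA); eauto.
        + exfalso. eapply (dlo_asym _ _ HB); eauto. }
    intros x1 y1 x2 y2 [E1|H1] [E2|H2];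
      try (injection E1 as <- <-); try (injection E2 as <- <-).
    + split; intros L; exfalso; [apply (dlo_irr _ HA x)|apply (dlo_irr _ HB z)]; auto.
    + apply (K _ _ H2).
    + apply (K _ _ H1).
    + apply G; auto.
Qed.
End Forth.

Definition swp {A B} (P : list (A * B)) : list (B * A) := map (fun p => (snd p, fst p)) P.
Lemma in_swp {A B} (P : list (A * B)) x y : In (y, x) (swp P) <-> In (x, y) P.
Proof.
  unfold swp. rewrite in_map_iff. split.
  - intros [[a b] [E H]]. simpl in E. injection E as -> ->. auto.
  - intros H. exists (x, y). auto.
Qed.

Lemma back (A B : Type) (ltA : A -> A -> Prop) (ltB : B -> B -> Prop)
  (HA : DLO ltA) (HB : DLO ltB) (a0 : A) P y :
  Good A B ltA ltB P -> exists x, Good A B ltA ltB ((x, y) :: P).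
Proof.
  intros G.
  destruct (forth B A ltB ltA HB HA a0 (swp P) y) as [x Hx].
  { intros y1 x1 y2 x2 H1 H2. rewrite in_swp in H1, H2. symmetry. apply G; auto. }
  exists x. intros x1 y1 x2 y2 H1 H2. symmetry. apply Hx.
  - destruct H1 as [E|H1]; [left; congruence|right; apply in_swp; auto].
  - destruct H2 as [E|H2]; [left; congruence|right; apply in_swp; auto].
Qed.

Section BackForth.
Variables (A B : Type) (ltA : A -> A -> Prop) (ltB : B -> B -> Prop)
  (HA : DLO ltA) (HB : DLO ltB) (a : nat -> A) (b : nat -> B)
  (Ha : forall x, exists n, a n = x) (Hb : forall y, exists n, b n = y).

Definition fy (P : list (A * B)) n : B :=
  epsilon (inhabits (b 0)) (fun y => Good A B ltA ltB ((a n, y) :: P)).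
Definition bx (P : list (A * B)) n : A :=
  epsilon (inhabits (a 0)) (fun x => Good A B ltA ltB ((x, b n) :: P)).

Fixpoint seqP n : list (A * B) :=
  match n with
  | 0 => []
  | S n => let P := seqP n in let P1 := (a n, fy P n) :: P in (bx P1 n, b n) :: P1
  end.

Lemma seqP_good n : Good A B ltA ltB (seqP n).
Proof.
  induction n as [|n IH]; simpl.
  - intros ? ? ? ? [].
  - assert (G1 : Good A B ltA ltB ((a n, fy (seqP n) n) :: seqP n)).
    { unfold fy. apply epsilon_spec. apply forth; auto; exact (b 0). }
    unfold bx at 1. apply epsilon_spec. apply back; auto; exact (a 0).
Qed.

Lemma seqP_mono n m : n <= m -> incl (seqP n) (seqP m).
Proof.
  induction 1 as [|m Hm IH]; [apply incl_refl|].
  intros p Hp. simpl. right. right. auto.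
Qed.

Definition kk (x : A) : nat := epsilon (inhabits 0) (fun k => a k = x).
Lemma kk_spec x : a (kk x) = x.
Proof. unfold kk. apply epsilon_spec. apply Ha. Qed.

Definition bf (x : A) : B := fy (seqP (kk x)) (kk x).

Lemma bf_in x : In (x, bf x) (seqP (S (kk x))).
Proof. simpl. right. left. rewrite kk_spec. reflexivity. Qed.

Theorem bf_iso : (forall x x', ltA x x' <-> ltB (bf x) (bf x')) /\ (forall y, exists x, bf x = y).
Proof.
  split.
  - intros x x'.
    set (N := S (kk x) + S (kk x')).
    apply (seqP_good N).
    + apply (seqP_mono (S (kk x)) N); [unfold N; lia|apply bf_in].
    + apply (seqP_mono (S (kk x')) N); [unfold N; lia|apply bf_in].
  - intros y. destruct (Hb y) as [n <-].
    set (x := bx ((a n, fy (seqP n) n) :: seqP n) n).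
    assert (H1 : In (x, b n) (seqP (S n))) by (simpl; left; reflexivity).
    exists x.
    set (N := S n + S (kk x)).
    apply (Good_eq A B ltA ltB HA HB (seqP N) x (bf x) x (b n)); auto.
    + apply seqP_good.
    + apply (seqP_mono (S (kk x))); [unfold N; lia|apply bf_in].
    + apply (seqP_mono (S n)); [unfold N; lia|auto].
Qed.
End BackForth.
Open Scope R_scope.


Definition eqdec {T : Type} (x y : T) : {x = y} + {x <> y} := excluded_middle_informative (x = y).

Section Comb.
Variables (Q : Type) (op : Q -> Q -> Q) (c : Q -> Q -> Q -> Z).
Hypothesis hc : circular_order op c.

Lemma c_range x y z : c x y z = (-1)%Z \/ c x y z = 0%Z \/ c x y z = 1%Z.
Proof. apply hc. Qed.
Lemma c_zero x y z : c x y z = 0%Z <-> (x = y \/ y = z \/ x = z).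
Proof. apply hc. Qed.
Lemma c_coc q1 q2 q3 q4 : (c q2 q3 q4 - c q1 q3 q4 + c q1 q2 q4 - c q1 q2 q3)%Z = 0%Z.
Proof. apply hc. Qed.
Lemma c_inv q x y z : c (op x q) (op y q) (op z q) = c x y z.
Proof. apply hc. Qed.

Lemma c_xxz x z : c x x z = 0%Z.
Proof. apply c_zero. auto. Qed.
Lemma c_xyy x y : c x y y = 0%Z.
Proof. apply c_zero. auto. Qed.
Lemma c_xyx x y : c x y x = 0%Z.
Proof. apply c_zero. auto. Qed.

Lemma alt1 x y z : c x z y = (- c x y z)%Z.
Proof. pose proof (c_coc x y z y). rewrite c_xyx, c_xyy in H. lia. Qed.
Lemma alt2 x y z : c y x z = (- c x y z)%Z.
Proof. pose proof (c_coc x y x z). rewrite c_xxz, c_xyx in H. lia. Qed.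

Lemma perms x y z :
  c x z y = (- c x y z)%Z /\ c y x z = (- c x y z)%Z /\ c y z x = c x y z /\
  c z x y = c x y z /\ c z y x = (- c x y z)%Z.
Proof.
  pose proof (alt1 x y z). pose proof (alt2 x y z). pose proof (alt1 y x z).
  pose proof (alt2 x z y). pose proof (alt1 z x y). lia.
Qed.

Lemma c_pm x y z : x <> y -> y <> z -> x <> z -> exists s, (0 <= s <= 1)%Z /\ c x y z = (2 * s - 1)%Z.
Proof.
  intros h1 h2 h3. destruct (c_range x y z) as [e|[e|e]].
  - exists 0%Z. lia.
  - apply c_zero in e. tauto.
  - exists 1%Z. lia.
Qed.

Definition cdone (x y z : Q) := True.

Ltac cfact x y z :=
  assert (cdone x y z) by exact I; assert (cdone x z y) by exact I;
  assert (cdone y x z) by exact I; assert (cdone y z x) by exact I;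
  assert (cdone z x y) by exact I; assert (cdone z y x) by exact I;
  let P := fresh "P" in pose proof (perms x y z) as P;
  first
  [ constr_eq x y; pose proof (c_xxz x z)
  | constr_eq y z; pose proof (c_xyy x y)
  | constr_eq x z; pose proof (c_xyx x y)
  | let s := fresh "s" in let Hs := fresh "Hs" in
    destruct (c_pm x y z) as [s Hs]; [congruence|congruence|congruence|] ].

Ltac scan :=
  repeat match goal with
  | |- context [c ?x ?y ?z] =>
      lazymatch goal with _ : cdone x y z |- _ => fail | _ => cfact x y z end
  | H : context [c ?x ?y ?z] |- _ =>
      lazymatch goal with _ : cdone x y z |- _ => fail | _ => cfact x y z end
  end.

Ltac split_ifs :=
  repeat match goal with
  | |- context [eqdec ?x ?y] => destruct (eqdec x y); try subst; try congruence
  | H : context [eqdec ?x ?y] |- _ => destruct (eqdec x y); try subst; try congruence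
  | |- context [Z.eqb ?a ?b] => destruct (Z.eqb_spec a b)
  | H : context [Z.eqb ?a ?b] |- _ => destruct (Z.eqb_spec a b)
  end.

Ltac sp x y := try (destruct (eqdec x y); [subst|]).
Ltac sp3 a b c := sp a b; sp a c; sp b c.
Ltac sp4 a b c d := sp a b; sp a c; sp a d; sp b c; sp b d; sp c d.

Ltac fin := first [reflexivity | congruence | lia | (exfalso; lia)].

Definition ltB (o x y : Q) : bool :=
  if eqdec x o then (if eqdec y o then false else true)
  else if eqdec y o then false else Z.eqb (c o x y) 1.

Lemma ltB_irr o x : ltB o x x = false.
Proof. unfold ltB. split_ifs. all: scan. all: fin. Qed.

Lemma ltB_trans o x y z : ltB o x y = true -> ltB o y z = true -> ltB o x z = true.
Proof.
  unfold ltB. intros H1 H2.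
  pose proof (c_coc o x y z).
  sp4 o x y z; split_ifs; scan; fin.
Qed.

Lemma ltB_tot o x y : x <> y -> ltB o x y = true \/ ltB o y x = true.
Proof.
  unfold ltB. intros H. sp3 o x y; split_ifs; scan; try (left; fin); try (right; fin).
Qed.

Lemma ltB_asym o x y : ltB o x y = true -> ltB o y x = false.
Proof.
  intros H. destruct (ltB o y x) eqn:E; auto.
  pose proof (ltB_trans o x y x H E). rewrite ltB_irr in H0. discriminate.
Qed.

Definition nu (o r x : Q) : Z := if ltB o x r then 1%Z else 0%Z.

Lemma K1 o r x y : nu o r x = nu o r y -> ltB o x y = ltB r x y.
Proof.
  unfold nu, ltB. intros H. pose proof (c_coc o r x y).
  sp4 o r x y; split_ifs; scan; fin.
Qed.

Lemma K2 o r x y : nu o r x = 0%Z -> nu o r y = 1%Z -> ltB r x y = true /\ ltB o y x = true.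
Proof.
  unfold nu, ltB. intros H1 H2. pose proof (c_coc o r x y).
  sp4 o r x y; split_ifs; scan; split; fin.
Qed.

Definition chi (a' a u : Q) : Z :=
  if eqdec a' a then 0%Z else if eqdec u a' then 1%Z else if Z.eqb (c a' u a) 1 then 1%Z else 0%Z.
Definition kappa (o a' a : Q) : Z :=
  if eqdec a' a then 0%Z else if ltB o a a' then 1%Z else 0%Z.

Lemma chi_lem o a' a u : (nu o a u - nu o a' u = chi a' a u - kappa o a' a)%Z.
Proof.
  unfold nu, chi, kappa, ltB. pose proof (c_coc o a' u a).
  sp4 o a' a u; split_ifs; scan; fin.
Qed.
End Comb.


Section Main.
Variables (Q : Type) (op : Q -> Q -> Q) (c : Q -> Q -> Q -> Z).
Hypotheses (hQ : is_quandle op) (hc : circular_order op c).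
Variable b : Q.

Lemma op_idem q : op q q = q.
Proof. apply hQ. Qed.
Lemma op_dist q r s : op (op q r) s = op (op q s) (op r s).
Proof. apply hQ. Qed.
Lemma op_inj x y s : op x s = op y s -> x = y.
Proof.
  intros E. destruct (proj1 (proj2 hQ) s (op y s)) as [p [_ U]].
  rewrite <- (U x E), <- (U y eq_refl). reflexivity.
Qed.

Definition dv (x s : Q) : Q := epsilon (inhabits x) (fun p => op p s = x).
Lemma dv_spec x s : op (dv x s) s = x.
Proof. unfold dv. apply epsilon_spec. destruct (proj1 (proj2 hQ) s x) as [p [H _]]. eauto. Qed.
Lemma dv_op x s : dv (op x s) s = x.
Proof. apply (op_inj _ _ s). apply dv_spec. Qed.

Lemma ltB_inv r x y : ltB Q c r (op x r) (op y r) = ltB Q c r x y.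
Proof.
  assert (E : c r (op x r) (op y r) = c r x y).
  { rewrite <- (c_inv Q op c hc r r x y). rewrite op_idem. reflexivity. }
  assert (Ex : op x r = r <-> x = r).
  { split; intros h. apply (op_inj _ _ r). rewrite h, op_idem; auto. subst; apply op_idem. }
  assert (Ey : op y r = r <-> y = r).
  { split; intros h. apply (op_inj _ _ r). rewrite h, op_idem; auto. subst; apply op_idem. }
  unfold ltB. rewrite E.
  destruct (eqdec (op x r) r) as [h1|h1]; destruct (eqdec x r) as [h2|h2]; try tauto;
  destruct (eqdec (op y r) r) as [h3|h3]; destruct (eqdec y r) as [h4|h4]; tauto.
Qed.

Lemma chi_inv s a' a u : chi Q c (op a' s) (op a s) (op u s) = chi Q c a' a u.
Proof.
  unfold chi. rewrite (c_inv Q op c hc).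
  destruct (eqdec a' a) as [h|h].
  - subst. destruct (eqdec (op a s) (op a s)); [reflexivity|congruence].
  - destruct (eqdec (op a' s) (op a s)) as [h'|h']; [apply op_inj in h'; contradiction|].
    destruct (eqdec u a') as [h2|h2].
    + subst. destruct (eqdec (op a' s) (op a' s)); [reflexivity|congruence].
    + destruct (eqdec (op u s) (op a' s)) as [h3|h3]; [apply op_inj in h3; contradiction|]. reflexivity.
Qed.

Definition nub := nu Q c b.

Definition phi (s : Q) (p : Z * Q) : Z * Q :=
  ((fst p - nub s (snd p) + nub s (op (snd p) s))%Z, op (snd p) s).
Definition psi (s : Q) (p : Z * Q) : Z * Q :=
  ((fst p + nub s (dv (snd p) s) - nub s (snd p))%Z, dv (snd p) s).

Lemma phi_psi s p : phi s (psi s p) = p.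
Proof. destruct p as [n x]. unfold phi, psi. simpl. rewrite dv_spec. f_equal. lia. Qed.
Lemma psi_phi s p : psi s (phi s p) = p.
Proof. destruct p as [n x]. unfold phi, psi. simpl. rewrite dv_op. f_equal. lia. Qed.

Definition ltL (p q : Z * Q) : Prop :=
  (fst p < fst q)%Z \/ (fst p = fst q /\ ltB Q c b (snd p) (snd q) = true).
Definition keylt (s : Q) (p q : Z * Q) : Prop :=
  (fst p - nub s (snd p) < fst q - nub s (snd q))%Z \/
  ((fst p - nub s (snd p) = fst q - nub s (snd q))%Z /\ ltB Q c s (snd p) (snd q) = true).

Lemma nu01 s x : nub s x = 0%Z \/ nub s x = 1%Z.
Proof. unfold nub, nu. destruct (ltB Q c b x s); auto. Qed.

Ltac kfin m n := split; intros [hh|[hh1 hh2]]; try discriminate; try (left; lia);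
  try (right; split; [lia|auto]);
  try (destruct (Z.eq_dec m n); [right; split; [lia|auto] | left; lia]);
  try (match goal with |- (?a < ?b)%Z \/ _ => destruct (Z.eq_dec a b); [right; split; [lia|auto] | left; lia] end).

Lemma Kchar s p q : ltL p q <-> keylt s p q.
Proof.
  destruct p as [m x], q as [n y]. unfold ltL, keylt. simpl.
  destruct (nu01 s x) as [hx|hx]; destruct (nu01 s y) as [hy|hy]; rewrite hx, hy.
  - rewrite <- (K1 Q op c hc b s x y) by (unfold nub in *; congruence). kfin m n.
  - destruct (K2 Q op c hc b s x y hx hy) as [h1 h2].
    rewrite h1. rewrite (ltB_asym Q op c hc b y x h2). kfin m n.
  - destruct (K2 Q op c hc b s y x hy hx) as [h1 h2].
    rewrite h2. rewrite (ltB_asym Q op c hc s y x h1). kfin m n.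
  - rewrite <- (K1 Q op c hc b s x y) by (unfold nub in *; congruence). kfin m n.
Qed.

Lemma phi_mono s p q : ltL p q <-> ltL (phi s p) (phi s q).
Proof.
  rewrite (Kchar s p q), (Kchar s (phi s p) (phi s q)).
  destruct p as [m x], q as [n y]. unfold keylt, phi. simpl. rewrite ltB_inv.
  split; intros [h|[h1 h2]]; [left; lia|right; split; auto; lia|left; lia|right; split; auto; lia].
Qed.

Lemma phi_hom r s p : phi (op r s) p = phi s (phi r (psi s p)).
Proof.
  destruct p as [n x]. unfold phi, psi. simpl.
  set (y := dv x s).
  assert (Hx : x = op y s) by (unfold y; rewrite dv_spec; auto).
  assert (Hz : op x (op r s) = op (op y r) s) by (rewrite Hx; symmetry; apply op_dist).
  rewrite Hz. f_equal.
  pose proof (chi_lem Q op c hc b r s y) as C1.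
  pose proof (chi_lem Q op c hc b r s (op y r)) as C2.
  pose proof (chi_lem Q op c hc b (op r s) s x) as C3.
  pose proof (chi_lem Q op c hc b (op r s) s (op (op y r) s)) as C4.
  assert (I1 : chi Q c (op r s) s x = chi Q c r s y).
  { rewrite Hx. rewrite <- (chi_inv s r s y). rewrite op_idem. auto. }
  assert (I2 : chi Q c (op r s) s (op (op y r) s) = chi Q c r s (op y r)).
  { rewrite <- (chi_inv s r s (op y r)). rewrite op_idem. auto. }
  unfold nub. lia.
Qed.
End Main.

Open Scope R_scope.

Section Ext.
Variables (X : Type) (io : X -> R).
Hypothesis io_dense : forall u v, u < v -> exists x, u < io x < v.

Definition Auto (g : X -> X) : Prop :=
  (forall x y, io x < io y <-> io (g x) < io (g y)) /\ (forall y, exists x, g x = y).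

Lemma Auto_le g (Hg : Auto g) x y : io x <= io y <-> io (g x) <= io (g y).
Proof.
  destruct Hg as [M _]. split; intros H.
  - destruct (Rle_or_lt (io (g x)) (io (g y))) as [h|h]; auto.
    apply M in h. lra.
  - destruct (Rle_or_lt (io x) (io y)) as [h|h]; auto.
    apply M in h. lra.
Qed.

Definition Char (g : X -> X) (t s : R) : Prop :=
  (forall x, io x <= t -> io (g x) <= s) /\ (forall x, t <= io x -> s <= io (g x)).

Lemma Char_ex g (Hg : Auto g) t : exists s, Char g t s.
Proof.
  set (E := fun v => exists x, io x <= t /\ v = io (g x)).
  destruct (io_dense (t - 1) t) as [x0 [Hx0 Hx0']]; [lra|].
  destruct (io_dense t (t + 1)) as [y0 [Hy0 Hy0']]; [lra|].
  assert (Hb : bound E).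
  { exists (io (g y0)). intros v [x [Hx ->]]. apply (proj1 (Auto_le g Hg x y0)). lra. }
  assert (Hn : exists v, E v) by (exists (io (g x0)); exists x0; split; [lra|auto]).
  destruct (completeness E Hb Hn) as [m [Hm1 Hm2]].
  exists m. split.
  - intros x Hx. apply Hm1. exists x. auto.
  - intros x Hx. apply Hm2. intros v [x' [Hx' ->]]. apply (proj1 (Auto_le g Hg x' x)). lra.
Qed.

Lemma Char_uniq g (Hg : Auto g) t s1 s2 : Char g t s1 -> Char g t s2 -> s1 = s2.
Proof.
  intros [A1 B1] [A2 B2].
  destruct (Rtotal_order s1 s2) as [L|[E|L]]; auto; exfalso.
  - destruct (io_dense s1 s2 L) as [y [Hy Hy']]. destruct (proj2 Hg y) as [x <-].
    destruct (Rle_or_lt (io x) t) as [h|h].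
    + specialize (A1 x h). lra.
    + assert (h' : t <= io x) by lra. specialize (B2 x h'). lra.
  - destruct (io_dense s2 s1 L) as [y [Hy Hy']]. destruct (proj2 Hg y) as [x <-].
    destruct (Rle_or_lt (io x) t) as [h|h].
    + specialize (A2 x h). lra.
    + assert (h' : t <= io x) by lra. specialize (B1 x h'). lra.
Qed.

Definition F (g : X -> X) (t : R) : R := epsilon (inhabits 0) (Char g t).

Lemma F_char g (Hg : Auto g) t : Char g t (F g t).
Proof. unfold F. apply epsilon_spec. apply Char_ex; auto. Qed.

Lemma F_eq g (Hg : Auto g) t s : Char g t s -> F g t = s.
Proof. intros H. apply (Char_uniq g Hg t); auto. apply F_char; auto. Qed.

Lemma Auto_comp g h : Auto g -> Auto h -> Auto (fun x => g (h x)).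
Proof.
  intros [Mg Sg] [Mh Sh]. split.
  - intros x y. rewrite (Mh x y). apply Mg.
  - intros y. destruct (Sg y) as [z <-]. destruct (Sh z) as [x <-]. eauto.
Qed.

Lemma Auto_id : Auto (fun x => x).
Proof. split; [tauto|eauto]. Qed.

Lemma F_comp g h (Hg : Auto g) (Hh : Auto h) t : F g (F h t) = F (fun x => g (h x)) t.
Proof.
  symmetry. apply F_eq. apply Auto_comp; auto.
  destruct (F_char h Hh t) as [A1 B1]. destruct (F_char g Hg (F h t)) as [A2 B2].
  split; intros x Hx; auto.
Qed.

Lemma F_id t : F (fun x => x) t = t.
Proof. apply F_eq. apply Auto_id. split; intros; auto. Qed.

Lemma F_io g (Hg : Auto g) x : F g (io x) = io (g x).
Proof. apply F_eq; auto. split; intros y Hy; apply (proj1 (Auto_le g Hg _ _)); auto. Qed.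

Lemma F_incr g (Hg : Auto g) t t' : t < t' -> F g t < F g t'.
Proof.
  intros L. destruct (io_dense t t' L) as [x1 [Hx1 Hx1']].
  destruct (io_dense (io x1) t') as [x2 [Hx2 Hx2']]; [lra|].
  destruct (F_char g Hg t) as [_ B1]. destruct (F_char g Hg t') as [A2 _].
  specialize (B1 x1 ltac:(lra)). specialize (A2 x2 ltac:(lra)).
  assert (io (g x1) < io (g x2)) by (apply (proj1 (proj1 Hg x1 x2)); lra). lra.
Qed.

Lemma F_le g (Hg : Auto g) t t' : F g t <= F g t' -> t <= t'.
Proof.
  intros H. destruct (Rle_or_lt t t') as [h|h]; auto.
  apply (F_incr g Hg) in h. lra.
Qed.

Lemma F_cont g (Hg : Auto g) t eps : 0 < eps ->
  exists delta, 0 < delta /\ forall t', Rabs (t' - t) < delta -> Rabs (F g t' - F g t) < eps.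
Proof.
  intros He.
  destruct (io_dense (F g t - eps) (F g t)) as [y1 [Hy1 Hy1']]; [lra|].
  destruct (io_dense (F g t) (F g t + eps)) as [y2 [Hy2 Hy2']]; [lra|].
  destruct (proj2 Hg y1) as [x1 <-]. destruct (proj2 Hg y2) as [x2 <-].
  rewrite <- (F_io g Hg) in Hy1, Hy1', Hy2, Hy2'.
  assert (L1 : io x1 < t).
  { destruct (Rle_or_lt t (io x1)) as [h|h]; auto.
    destruct h as [h|h]. apply (F_incr g Hg) in h. lra. rewrite h in Hy1'. lra. }
  assert (L2 : t < io x2).
  { destruct (Rle_or_lt (io x2) t) as [h|h]; auto.
    destruct h as [h|h]. apply (F_incr g Hg) in h. lra. rewrite <- h in Hy2. lra. }
  exists (Rmin (t - io x1) (io x2 - t)). split.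
  - apply Rmin_glb_lt; lra.
  - intros t' Ht'.
    assert (h1 : t - io x1 >= Rmin (t - io x1) (io x2 - t)) by (apply Rle_ge, Rmin_l).
    assert (h2 : io x2 - t >= Rmin (t - io x1) (io x2 - t)) by (apply Rle_ge, Rmin_r).
    apply Rabs_def2 in Ht'.
    assert (a1 : F g (io x1) < F g t') by (apply (F_incr g Hg); lra).
    assert (a2 : F g t' < F g (io x2)) by (apply (F_incr g Hg); lra).
    apply Rabs_def1; lra.
Qed.

Lemma F_inv g g' (Hg : Auto g) (Hg' : Auto g') (H : forall x, g (g' x) = x) t :
  F g (F g' t) = t.
Proof.
  rewrite F_comp; auto.
  replace (fun x => g (g' x)) with (fun x : X => x) by (apply functional_extensionality; auto).
  apply F_id.
Qed.
End Ext.

Open Scope R_scope.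

Lemma opt_pos t : 0 < 1 + t ^ 2.
Proof. nra. Qed.

Lemma pt_prop t : fst ((1 - t^2)/(1+t^2), 2*t/(1+t^2)) ^ 2 + snd ((1 - t^2)/(1+t^2), 2*t/(1+t^2)) ^ 2 = 1.
Proof. simpl. pose proof (opt_pos t). field. lra. Qed.

Definition pt (t : R) : S1 := exist _ _ (pt_prop t).

Lemma inf_prop : fst (-1, 0) ^ 2 + snd (-1, 0) ^ 2 = 1.
Proof. simpl. ring. Qed.
Definition inf : S1 := exist _ _ inf_prop.

Definition chart (P : S1) : R := snd (proj1_sig P) / (1 + fst (proj1_sig P)).

Ltac sm := cbn [pt inf chart proj1_sig fst snd] in *.

Lemma S1_eq (P P' : S1) : proj1_sig P = proj1_sig P' -> P = P'.
Proof. destruct P as [p h], P' as [p' h']. simpl. intros ->. f_equal. apply proof_irrelevance. Qed.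

Lemma pt_not_inf t : fst (proj1_sig (pt t)) <> -1.
Proof. sm. pose proof (opt_pos t). intros E.
  assert (H1: (1 - t^2)/(1+t^2) * (1+t^2) = 1 - t^2) by (field; lra).
  rewrite E in H1. lra. Qed.

Lemma chart_pt t : chart (pt t) = t.
Proof. unfold chart. sm. pose proof (opt_pos t).
  assert (E : 1 + (1 - t^2)/(1+t^2) = 2/(1+t^2)) by (field; lra).
  rewrite E. field. lra. Qed.

Lemma pt_inj a b : pt a = pt b -> a = b.
Proof. intros E. rewrite <- (chart_pt a), <- (chart_pt b), E. reflexivity. Qed.

Lemma inf_or_pt P : P = inf \/ (fst (proj1_sig P) <> -1 /\ P = pt (chart P)).
Proof.
  destruct P as [[x y] h]. sm.
  destruct (Req_dec x (-1)) as [E|E].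
  - left. apply S1_eq. sm. subst x. assert (y = 0) by nra. subst. reflexivity.
  - right. split; auto. apply S1_eq. unfold chart. sm.
    assert (Hx : 0 < 1 + x) by nra.
    assert (Ht : 1 + (y / (1 + x))^2 = 2 / (1 + x)).
    { assert (Hy2 : (y / (1 + x))^2 = y^2 / (1+x)^2) by (field; lra).
      rewrite Hy2. replace (y^2) with (1 - x^2) by lra. field. lra. }
    assert (Ht' : 1 - (y / (1 + x))^2 = 2 * x / (1 + x)).
    { replace (1 - (y / (1 + x))^2) with (2 - (1 + (y / (1 + x))^2)) by ring.
      rewrite Ht. field. lra. }
    rewrite Ht, Ht'. f_equal; field; lra.
Qed.

Lemma inf_or_pt' P : P = inf \/ exists t, P = pt t.
Proof. destruct (inf_or_pt P) as [H|[_ H]]; eauto. Qed.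

Definition lift (F : R -> R) (P : S1) : S1 :=
  if Req_EM_T (fst (proj1_sig P)) (-1) then P else pt (F (chart P)).

Lemma lift_inf F : lift F inf = inf.
Proof. unfold lift. destruct (Req_EM_T _ _) as [_|n]; auto. sm. lra. Qed.

Lemma lift_pt F t : lift F (pt t) = pt (F t).
Proof. unfold lift. destruct (Req_EM_T _ _) as [e|_].
  - exfalso. apply (pt_not_inf t e).
  - rewrite chart_pt. auto. Qed.

Lemma lift_comp F G P : lift F (lift G P) = lift (fun t => F (G t)) P.
Proof. destruct (inf_or_pt P) as [->|[_ ->]].
  - rewrite !lift_inf. auto.
  - rewrite !lift_pt. auto. Qed.

Lemma lift_ext F G : (forall t, F t = G t) -> forall P, lift F P = lift G P.
Proof. intros H P. destruct (inf_or_pt P) as [->|[_ ->]].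
  - rewrite !lift_inf. auto.
  - rewrite !lift_pt, H. auto. Qed.

Lemma lift_id P : lift (fun t => t) P = P.
Proof. destruct (inf_or_pt P) as [->|[_ ->]].
  - rewrite !lift_inf. auto.
  - rewrite !lift_pt. auto. Qed.

Definition d2 (P Q : S1) : R :=
  (fst (proj1_sig P) - fst (proj1_sig Q)) ^ 2 + (snd (proj1_sig P) - snd (proj1_sig Q)) ^ 2.

Lemma S1dist_d2 P Q : S1dist P Q = sqrt (d2 P Q).
Proof. reflexivity. Qed.

Lemma d2_pos P Q : 0 <= d2 P Q.
Proof. unfold d2. pose proof (pow2_ge_0 (fst (proj1_sig P) - fst (proj1_sig Q))). pose proof (pow2_ge_0 (snd (proj1_sig P) - snd (proj1_sig Q))). lra. Qed.

Lemma sqrt_lt_iff u d : 0 <= u -> 0 < d -> (sqrt u < d <-> u < d ^ 2).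
Proof.
  intros Hu Hd. split; intros H.
  - pose proof (sqrt_pos u). pose proof (sqrt_sqrt u Hu). nra.
  - rewrite <- (sqrt_pow2 d) by lra. apply sqrt_lt_1; nra.
Qed.

Lemma d2_pt_pt a b : d2 (pt a) (pt b) = 4 * (a - b)^2 / ((1 + a^2) * (1 + b^2)).
Proof. unfold d2. sm. pose proof (opt_pos a). pose proof (opt_pos b). field. lra. Qed.

Lemma d2_inf_pt t : d2 inf (pt t) = 4 / (1 + t^2).
Proof. unfold d2. sm. pose proof (opt_pos t). field. lra. Qed.

Lemma d2_pt_inf t : d2 (pt t) inf = 4 / (1 + t^2).
Proof. unfold d2. sm. pose proof (opt_pos t). field. lra. Qed.

Lemma d2_refl P : d2 P P = 0.
Proof. unfold d2. ring. Qed.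

Definition Rcont (F : R -> R) : Prop := forall t eps, 0 < eps ->
  exists delta, 0 < delta /\ forall t', Rabs (t' - t) < delta -> Rabs (F t' - F t) < eps.

Lemma lift_cont F : Rcont F ->
  (forall M, exists N, forall t, N < Rabs t -> M < Rabs (F t)) ->
  S1_continuous (lift F).
Proof.
  intros HF Hp P eps He.
  destruct (inf_or_pt' P) as [->|[s ->]].
  - destruct (Hp (2 / eps)) as [N HN].
    set (N' := Rabs N).
    assert (HN' : 0 <= N') by apply Rabs_pos.
    exists (1 / (N' + 1)). split; [apply Rdiv_lt_0_compat; lra|].
    intros y Hy. rewrite lift_inf.
    destruct (inf_or_pt' y) as [->|[t ->]].
    + rewrite lift_inf. rewrite S1dist_d2, d2_refl, sqrt_0. auto.
    + rewrite lift_pt. rewrite S1dist_d2 in *. rewrite d2_inf_pt in *.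
      pose proof (opt_pos t). pose proof (opt_pos (F t)).
      apply sqrt_lt_iff in Hy; [|apply Rlt_le, Rdiv_lt_0_compat; lra|apply Rdiv_lt_0_compat; lra].
      assert (Ht : N' < Rabs t).
      { destruct (Rle_or_lt (Rabs t) N') as [h|h]; auto. exfalso.
        assert (h2 : t ^ 2 <= N' ^ 2).
        { rewrite <- (pow2_abs t). apply pow_incr. split; [apply Rabs_pos|auto]. }
        assert (h3 : (1 / (N' + 1)) ^ 2 * (1 + t^2) < 4).
        { replace ((1 / (N' + 1)) ^ 2) with (1 / (N' + 1) ^ 2) by (field; lra).
          apply Rmult_lt_reg_l with (r := (N'+1)^2). nra.
          field_simplify; [|lra]. nra. }
        assert (h4 : 4 / (1 + t ^ 2) * (1 + t^2) = 4) by (field; lra).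
        nra. }
      assert (HFt : 2 / eps < Rabs (F t)).
      { apply HN. unfold N' in Ht. pose proof (Rle_abs N). lra. }
      apply sqrt_lt_iff; [apply Rlt_le, Rdiv_lt_0_compat; lra|auto|].
      assert (h5 : (2 / eps) ^ 2 < (F t) ^ 2).
      { rewrite <- (pow2_abs (F t)). assert (0 < 2 / eps) by (apply Rdiv_lt_0_compat; lra). nra. }
      assert (h6 : (2 / eps) ^ 2 * eps ^ 2 = 4) by (field; lra).
      apply Rmult_lt_reg_r with (r := 1 + F t ^ 2); [lra|].
      replace (4 / (1 + F t ^ 2) * (1 + F t ^ 2)) with 4 by (field; lra).
      nra.
  - set (K := 1 + s ^ 2).
    assert (HK : 1 <= K) by (unfold K; pose proof (pow2_ge_0 s); lra).
    destruct (HF s (eps / 2)) as [dl [Hdl HFd]]; [lra|].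
    set (de := Rmin (1 / K) (dl / K)).
    assert (Hde : 0 < de) by (apply Rmin_glb_lt; apply Rdiv_lt_0_compat; lra).
    assert (Hde1 : de <= 1 / K) by apply Rmin_l.
    assert (Hde2 : de <= dl / K) by apply Rmin_r.
    assert (HdK1 : de * K <= 1) by (apply Rmult_le_reg_r with (r := / K); [apply Rinv_0_lt_compat; lra|];
        rewrite Rmult_assoc, Rinv_r, Rmult_1_r by lra; unfold Rdiv in Hde1; lra).
    assert (HdK2 : de * K <= dl) by (apply Rmult_le_reg_r with (r := / K); [apply Rinv_0_lt_compat; lra|];
        rewrite Rmult_assoc, Rinv_r, Rmult_1_r by lra; unfold Rdiv in Hde2; lra).
    exists de. split; auto.
    intros y Hy. rewrite lift_pt. rewrite S1dist_d2 in *.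
    destruct (inf_or_pt' y) as [->|[t ->]].
    + exfalso. rewrite d2_pt_inf in Hy. fold K in Hy.
      apply sqrt_lt_iff in Hy; [|apply Rlt_le, Rdiv_lt_0_compat; lra|lra].
      assert (h1 : 4 / K * K = 4) by (field; lra).
      assert (h2 : de ^ 2 * K <= 1) by nra.
      nra.
    + rewrite lift_pt. apply sqrt_lt_iff in Hy; [|apply d2_pos|lra].
      rewrite d2_pt_pt in *. fold K in Hy.
      pose proof (opt_pos t) as Ht.
      set (D := (s - t) ^ 2) in *.
      assert (HD0 : 0 <= D) by apply pow2_ge_0.
      assert (h1 : 4 * D < de ^ 2 * (K * (1 + t ^ 2))).
      { assert (E : 4 * D / (K * (1 + t ^ 2)) * (K * (1 + t ^ 2)) = 4 * D) by (field; repeat split; lra).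
        rewrite <- E. apply Rmult_lt_compat_r; [nra|exact Hy]. }
      assert (h2 : t ^ 2 <= 2 * s ^ 2 + 2 * D) by (unfold D; pose proof (pow2_ge_0 (2 * s - t)); nra).
      assert (h3 : de ^ 2 * K <= 1) by nra.
      assert (h4 : de ^ 2 * (K * (1 + t ^ 2)) <= 2 * de ^ 2 * K ^ 2 + 2 * D).
      { assert (1 + t ^ 2 <= 2 * K + 2 * D) by (unfold K; lra).
        assert (de ^ 2 * K * (1 + t ^ 2) <= de ^ 2 * K * (2 * K + 2 * D)).
        { apply Rmult_le_compat_l; [nra|auto]. }
        nra. }
      assert (h5 : D < (de * K) ^ 2) by nra.
      assert (h6 : Rabs (t - s) < dl).
      { assert (Rabs (t - s) ^ 2 < (de * K) ^ 2) by (rewrite pow2_abs; unfold D in h5; nra).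
        assert (Rabs (t - s) < de * K).
        { destruct (Rle_or_lt (de * K) (Rabs (t - s))) as [h|h]; auto.
          assert (0 <= de * K) by nra. exfalso. nra. }
        lra. }
      specialize (HFd t h6).
      assert (h7 : (F s - F t) ^ 2 < (eps / 2) ^ 2).
      { rewrite <- (pow2_abs (F s - F t)). rewrite Rabs_minus_sym.
        pose proof (Rabs_pos (F t - F s)). nra. }
      pose proof (opt_pos (F s)). pose proof (opt_pos (F t)).
      assert (h8 : 4 * (F s - F t) ^ 2 / ((1 + F s ^ 2) * (1 + F t ^ 2)) <= 4 * (F s - F t) ^ 2).
      { unfold Rdiv. rewrite <- (Rmult_1_r (4 * (F s - F t) ^ 2)) at 2.
        apply Rmult_le_compat_l. pose proof (pow2_ge_0 (F s - F t)); lra.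
        rewrite <- Rinv_1. apply Rinv_le_contravar; [lra|nra]. }
      apply sqrt_lt_iff; [rewrite <- d2_pt_pt; apply d2_pos|lra|]. nra.
Qed.
Lemma o_ppp u v w : orient (pt u) (pt v) (pt w) =
  4 * ((v - u) * (w - v) * (w - u)) / ((1 + u^2) * (1 + v^2) * (1 + w^2)).
Proof. unfold orient; sm. pose proof (opt_pos u). pose proof (opt_pos v). pose proof (opt_pos w). field. repeat split; lra. Qed.
Lemma o_ipp v w : orient inf (pt v) (pt w) = 4 * (w - v) / ((1 + v^2) * (1 + w^2)).
Proof. unfold orient; sm. pose proof (opt_pos v). pose proof (opt_pos w). field. repeat split; lra. Qed.
Lemma o_pip u w : orient (pt u) inf (pt w) = 4 * (u - w) / ((1 + u^2) * (1 + w^2)).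
Proof. unfold orient; sm. pose proof (opt_pos u). pose proof (opt_pos w). field. repeat split; lra. Qed.
Lemma o_ppi u v : orient (pt u) (pt v) inf = 4 * (v - u) / ((1 + u^2) * (1 + v^2)).
Proof. unfold orient; sm. pose proof (opt_pos u). pose proof (opt_pos v). field. repeat split; lra. Qed.
Lemma o_aac a c : orient a a c = 0.
Proof. unfold orient. ring. Qed.
Lemma o_aba a b : orient a b a = 0.
Proof. unfold orient. ring. Qed.
Lemma o_abb a b : orient a b b = 0.
Proof. unfold orient. ring. Qed.

Lemma pos_div4 X Y : 0 < Y -> (0 < 4 * X / Y <-> 0 < X).
Proof.
  intros HY. split; intros H.
  - destruct (Rle_or_lt X 0) as [h|h]; auto. exfalso.
    assert (4 * X / Y <= 0). { unfold Rdiv. assert (0 < / Y) by (apply Rinv_0_lt_compat; lra). nra. }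
    lra.
  - unfold Rdiv. assert (0 < / Y) by (apply Rinv_0_lt_compat; lra). nra.
Qed.

Definition Incr (F : R -> R) : Prop := forall a b, a < b -> F a < F b.

Lemma dsign F (HF : Incr F) u v : (0 < v - u <-> 0 < F v - F u) /\ (v - u < 0 <-> F v - F u < 0).
Proof.
  destruct (Rtotal_order u v) as [L|[E|L]].
  - pose proof (HF _ _ L). split; split; intros; lra.
  - subst. split; split; intros; lra.
  - pose proof (HF _ _ L). split; split; intros; lra.
Qed.

Lemma sgn_cases a a' : (0 < a <-> 0 < a') /\ (a < 0 <-> a' < 0) ->
  (a < 0 /\ a' < 0) \/ (a = 0 /\ a' = 0) \/ (0 < a /\ 0 < a').
Proof.
  intros [A1 A2]. destruct (Rtotal_order a 0) as [h|[h|h]].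
  - left. split; auto. apply A2; auto.
  - right; left. split; auto. destruct (Rtotal_order a' 0) as [h'|[h'|h']]; auto.
    + apply A2 in h'. lra.
    + apply A1 in h'. lra.
  - right; right. split; auto. apply A1; auto.
Qed.

Lemma sign3 a b c a' b' c' :
  (0 < a <-> 0 < a') /\ (a < 0 <-> a' < 0) ->
  (0 < b <-> 0 < b') /\ (b < 0 <-> b' < 0) ->
  (0 < c <-> 0 < c') /\ (c < 0 <-> c' < 0) ->
  (0 < a * b * c <-> 0 < a' * b' * c').
Proof.
  intros A B C.
  destruct (sgn_cases _ _ A) as [[h1 h2]|[[h1 h2]|[h1 h2]]];
  destruct (sgn_cases _ _ B) as [[h3 h4]|[[h3 h4]|[h3 h4]]];
  destruct (sgn_cases _ _ C) as [[h5 h6]|[[h5 h6]|[h5 h6]]];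
  try subst;
  try (assert (0 < a * b) by nra); try (assert (a * b < 0) by nra);
  try (assert (0 < a' * b') by nra); try (assert (a' * b' < 0) by nra);
  split; intros HH; try nra.
Qed.

Lemma lift_orient F (HF : Incr F) a b c :
  0 < orient a b c <-> 0 < orient (lift F a) (lift F b) (lift F c).
Proof.
  destruct (inf_or_pt' a) as [->|[u ->]]; destruct (inf_or_pt' b) as [->|[v ->]];
  destruct (inf_or_pt' c) as [->|[w ->]];
  rewrite ?lift_inf, ?lift_pt; rewrite ?o_aac, ?o_aba, ?o_abb; try tauto.
  - rewrite !o_ipp. rewrite !pos_div4 by (pose proof (opt_pos v); pose proof (opt_pos w);
      pose proof (opt_pos (F v)); pose proof (opt_pos (F w)); nra).
    apply (dsign F HF).
  - rewrite !o_pip. rewrite !pos_div4 by (pose proof (opt_pos u); pose proof (opt_pos w);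
      pose proof (opt_pos (F u)); pose proof (opt_pos (F w)); nra).
    apply (dsign F HF).
  - rewrite !o_ppi. rewrite !pos_div4 by (pose proof (opt_pos u); pose proof (opt_pos v);
      pose proof (opt_pos (F u)); pose proof (opt_pos (F v)); nra).
    apply (dsign F HF).
  - rewrite !o_ppp. rewrite !pos_div4.
    + apply sign3; apply (dsign F HF).
    + pose proof (opt_pos (F u)); pose proof (opt_pos (F v)); pose proof (opt_pos (F w)).
      apply Rmult_lt_0_compat; [apply Rmult_lt_0_compat|]; lra.
    + pose proof (opt_pos u); pose proof (opt_pos v); pose proof (opt_pos w).
      apply Rmult_lt_0_compat; [apply Rmult_lt_0_compat|]; lra.
Qed.

Lemma proper_of F G (HF : Incr F) (HGF : forall t, G (F t) = t) (HFG : forall t, F (G t) = t) :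
  forall M, exists N, forall t, N < Rabs t -> M < Rabs (F t).
Proof.
  intros M. set (M' := Rabs M).
  exists (Rmax (Rabs (G M')) (Rabs (G (- M')))). intros t Ht.
  assert (h1 : Rabs (G M') <= Rmax (Rabs (G M')) (Rabs (G (- M')))) by apply Rmax_l.
  assert (h2 : Rabs (G (- M')) <= Rmax (Rabs (G M')) (Rabs (G (- M')))) by apply Rmax_r.
  assert (hM : M <= M') by apply Rle_abs.
  destruct (Rle_or_lt 0 t) as [ht|ht].
  - assert (Et : Rabs t = t) by (apply Rabs_right; lra). rewrite Et in Ht.
    assert (G M' < t) by (pose proof (Rle_abs (G M')); lra).
    apply HF in H. rewrite HFG in H. pose proof (Rle_abs (F t)). lra.
  - assert (Et : Rabs t = - t) by (apply Rabs_left; lra). rewrite Et in Ht.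
    assert (t < G (- M')) by (pose proof (Rabs_Ropp (G (- M'))); pose proof (Rle_abs (- G (- M'))); lra).
    apply HF in H. rewrite HFG in H. pose proof (Rabs_pos M). pose proof (Rle_abs (- F t)). rewrite Rabs_Ropp in *. unfold M' in *. lra.
Qed.

Section MkH.
Variables (F G : R -> R) (HGF : forall t, G (F t) = t) (HFG : forall t, F (G t) = t)
  (HFi : Incr F) (HGi : Incr G) (HFc : Rcont F) (HGc : Rcont G).

Definition mkH : HomeoPlus.
Proof.
  refine {| hp_fun := lift F; hp_inv := lift G |}.
  - intros x. rewrite lift_comp. rewrite (lift_ext _ (fun t => t)) by auto. apply lift_id.
  - intros x. rewrite lift_comp. rewrite (lift_ext _ (fun t => t)) by auto. apply lift_id.
  - apply lift_cont; auto. apply (proper_of F G); auto.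
  - apply lift_cont; auto. apply (proper_of G F); auto.
  - intros a b c. apply lift_orient; auto.
Defined.

Lemma mkH_fun : hp_fun mkH = lift F.
Proof. reflexivity. Qed.
Lemma mkH_inv : hp_inv mkH = lift G.
Proof. reflexivity. Qed.
End MkH.

Open Scope R_scope.

Definition zofn (k : nat) : Z := let (i, j) := Cantor.of_nat k in (Z.of_nat i - Z.of_nat j)%Z.
Lemma zofn_surj z : exists k, zofn k = z.
Proof.
  exists (Cantor.to_nat (Z.to_nat z, Z.to_nat (- z))). unfold zofn.
  rewrite Cantor.cancel_of_to. lia.
Qed.

Definition dseq (n : nat) : R := let (i, k) := Cantor.of_nat n in IZR (zofn i) / INR (S k).

Lemma dseq_dense u v : u < v -> exists n, u < dseq n < v.
Proof.
  intros Huv.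
  set (z := up (/ (v - u))).
  destruct (archimed (/ (v - u))) as [A1 A2]. fold z in A1, A2.
  assert (Hpos : 0 < / (v - u)) by (apply Rinv_0_lt_compat; lra).
  assert (Hz : (0 <= z)%Z) by (apply le_IZR; lra).
  set (k := Z.to_nat z).
  assert (Hk : INR (S k) = IZR z + 1).
  { rewrite S_INR. unfold k. rewrite INR_IZR_INZ. rewrite Z2Nat.id by auto. auto. }
  set (N := INR (S k)) in *.
  assert (HN : 0 < N) by lra.
  assert (HN2 : 1 / N < v - u).
  { assert (/ (v - u) < N) by lra.
    apply Rmult_lt_reg_r with (r := N / (v - u)). apply Rdiv_lt_0_compat; lra.
    replace (1 / N * (N / (v - u))) with (/ (v - u)) by (field; lra).
    replace ((v - u) * (N / (v - u))) with N by (field; lra). auto. }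
  set (m := up (u * N)).
  destruct (archimed (u * N)) as [B1 B2]. fold m in B1, B2.
  destruct (zofn_surj m) as [i Hi].
  exists (Cantor.to_nat (i, k)). unfold dseq. rewrite Cantor.cancel_of_to. rewrite Hi. fold N.
  split.
  - apply Rmult_lt_reg_r with (r := N); auto. replace (IZR m / N * N) with (IZR m) by (field; lra). auto.
  - apply Rmult_lt_reg_r with (r := N); auto. replace (IZR m / N * N) with (IZR m) by (field; lra).
    assert (1 < (v - u) * N).
    { replace 1 with (1 / N * N) by (field; lra). apply Rmult_lt_compat_r; auto. }
    nra.
Qed.

Definition Dt : Type := { u : R | exists n, u = dseq n }.
Definition ltD (u v : Dt) : Prop := proj1_sig u < proj1_sig v.
Lemma Dt_eq (u v : Dt) : proj1_sig u = proj1_sig v -> u = v.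
Proof. destruct u as [x p], v as [y q]. simpl. intros ->. f_equal. apply proof_irrelevance. Qed.
Definition dD (n : nat) : Dt := exist _ (dseq n) (ex_intro _ n eq_refl).
Lemma dD_surj u : exists n, dD n = u.
Proof. destruct u as [x [n e]]. exists n. apply Dt_eq. simpl. auto. Qed.

Lemma Dt_between (u v : R) : u < v -> exists w : Dt, u < proj1_sig w < v.
Proof. intros H. destruct (dseq_dense u v H) as [n Hn]. exists (dD n). exact Hn. Qed.

Lemma DLO_D : DLO ltD.
Proof.
  unfold ltD. constructor.
  - intros x. lra.
  - intros x y z. lra.
  - intros x y H. destruct (Rtotal_order (proj1_sig x) (proj1_sig y)) as [h|[h|h]]; auto.
    exfalso. apply H. apply Dt_eq. auto.
  - intros x y H. destruct (Dt_between _ _ H) as [w Hw]. exists w. lra.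
  - intros x. destruct (Dt_between (proj1_sig x) (proj1_sig x + 1)) as [w Hw]; [lra|]. exists w. lra.
  - intros x. destruct (Dt_between (proj1_sig x - 1) (proj1_sig x)) as [w Hw]; [lra|]. exists w. lra.
Qed.

Open Scope R_scope.

Section Final.
Variables (Q : Type) (op : Q -> Q -> Q) (c : Q -> Q -> Q -> Z).
Hypotheses (hQ : is_quandle op) (hc : circular_order op c).
Variable b : Q.
Variable eQ : nat -> Q.
Hypothesis eQ_surj : forall q, exists n, eQ n = q.

Definition LL := ltL Q c b.

Lemma LL_irr p : ~ LL p p.
Proof. destruct p as [m x]. unfold LL, ltL. simpl. rewrite (ltB_irr Q op c hc). intros [h|[_ h]]; [lia|discriminate]. Qed.

Lemma LL_trans p q r : LL p q -> LL q r -> LL p r.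
Proof.
  destruct p as [m x], q as [n y], r as [k z]. unfold LL, ltL. simpl.
  intros [h1|[h1 h1']] [h2|[h2 h2']]; try (left; lia).
  right. split; [lia|]. eapply (ltB_trans Q op c hc); eauto.
Qed.

Lemma LL_tot p q : p <> q -> LL p q \/ LL q p.
Proof.
  destruct p as [m x], q as [n y]. unfold LL, ltL. simpl. intros H.
  destruct (Z.lt_trichotomy m n) as [h|[h|h]]; try (left; left; lia); try (right; left; lia).
  subst. assert (x <> y) by congruence.
  destruct (ltB_tot Q op c hc b x y H0); [left|right]; right; auto.
Qed.

Definition X : Type := ((Z * Q) * Dt)%type.
Definition ltX (x y : X) : Prop := LL (fst x) (fst y) \/ (fst x = fst y /\ ltD (snd x) (snd y)).

Lemma DLO_X : DLO ltX.
Proof.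
  pose proof DLO_D as HD. unfold ltX. constructor.
  - intros [p u] [h|[_ h]]; simpl in *. apply (LL_irr p h). apply (dlo_irr _ HD u h).
  - intros [p u] [q v] [r w] [h1|[h1 h1']] [h2|[h2 h2']]; simpl in *; subst.
    + left. eapply LL_trans; eauto.
    + left. auto.
    + left. auto.
    + right. split; auto. eapply (dlo_trans _ HD); eauto.
  - intros [p u] [q v] H. simpl.
    destruct (classic (p = q)) as [E|E].
    + subst. assert (u <> v) by congruence. destruct (dlo_tot _ HD u v H0); [left|right]; right; auto.
    + destruct (LL_tot p q E); [left|right]; left; auto.
  - intros [p u] [q v] [h|[h1 h2]]; simpl in *.
    + destruct (dlo_nomax _ HD u) as [w Hw]. exists (p, w). simpl. split; [right; auto|left; auto].
    + subst. destruct (dlo_dense _ HD u v h2) as [w Hw]. exists (q, w). simpl. split; right; tauto.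
  - intros [p u]. destruct (dlo_nomax _ HD u) as [w Hw]. exists (p, w). simpl. right; auto.
  - intros [p u]. destruct (dlo_nomin _ HD u) as [w Hw]. exists (p, w). simpl. right; auto.
Qed.

Definition aX (n : nat) : X :=
  let (i, j) := Cantor.of_nat n in let (k, l) := Cantor.of_nat i in ((zofn k, eQ l), dD j).

Lemma aX_surj x : exists n, aX n = x.
Proof.
  destruct x as [[z q] u].
  destruct (zofn_surj z) as [k Hk]. destruct (eQ_surj q) as [l Hl]. destruct (dD_surj u) as [j Hj].
  exists (Cantor.to_nat (Cantor.to_nat (k, l), j)). unfold aX.
  rewrite !Cantor.cancel_of_to. subst. reflexivity.
Qed.

Definition iD : X -> Dt := bf X Dt ltX ltD aX dD.
Definition io (x : X) : R := proj1_sig (iD x).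

Lemma io_iso x y : ltX x y <-> io x < io y.
Proof. apply (proj1 (bf_iso X Dt ltX ltD DLO_X DLO_D aX dD aX_surj dD_surj)). Qed.

Lemma io_dense u v : u < v -> exists x, u < io x < v.
Proof.
  intros H. destruct (dseq_dense u v H) as [n Hn].
  destruct (proj2 (bf_iso X Dt ltX ltD DLO_X DLO_D aX dD aX_surj dD_surj) (dD n)) as [x Hx].
  exists x. unfold io. fold iD in Hx. rewrite Hx. exact Hn.
Qed.

Lemma io_inj x y : io x = io y -> x = y.
Proof.
  intros E. destruct (classic (x = y)) as [h|h]; auto. exfalso.
  destruct (dlo_tot _ DLO_X x y h) as [L|L]; apply io_iso in L; lra.
Qed.

Definition Phi (s : Q) (x : X) : X := (phi Q op c b s (fst x), snd x).
Definition Psi (s : Q) (x : X) : X := (psi Q op c b s (fst x), snd x).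

Lemma Phi_Psi s x : Phi s (Psi s x) = x.
Proof. destruct x. unfold Phi, Psi. simpl. rewrite (phi_psi Q op c hQ). auto. Qed.
Lemma Psi_Phi s x : Psi s (Phi s x) = x.
Proof. destruct x. unfold Phi, Psi. simpl. rewrite (psi_phi Q op c hQ). auto. Qed.

Lemma Phi_mono s x y : ltX x y <-> ltX (Phi s x) (Phi s y).
Proof.
  destruct x as [p u], y as [q v]. unfold ltX, Phi. simpl. unfold LL.
  rewrite (phi_mono Q op c hQ hc b s p q).
  assert (I : phi Q op c b s p = phi Q op c b s q <-> p = q).
  { split; [|intros ->; auto]. intros E.
    rewrite <- (psi_phi Q op c hQ b s p), <- (psi_phi Q op c hQ b s q), E. auto. }
  rewrite I. tauto.
Qed.

Lemma Psi_mono s x y : ltX x y <-> ltX (Psi s x) (Psi s y).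
Proof.
  rewrite (Phi_mono s (Psi s x) (Psi s y)). rewrite !Phi_Psi. tauto.
Qed.

Lemma Auto_Phi s : Auto X io (Phi s).
Proof.
  split.
  - intros x y. rewrite <- !io_iso. apply Phi_mono.
  - intros y. exists (Psi s y). apply Phi_Psi.
Qed.
Lemma Auto_Psi s : Auto X io (Psi s).
Proof.
  split.
  - intros x y. rewrite <- !io_iso. apply Psi_mono.
  - intros y. exists (Phi s y). apply Psi_Phi.
Qed.

Definition Ff (s : Q) := F X io (Phi s).
Definition Gf (s : Q) := F X io (Psi s).

Lemma GF s t : Gf s (Ff s t) = t.
Proof. apply (F_inv X io io_dense); [apply Auto_Psi|apply Auto_Phi|apply Psi_Phi]. Qed.
Lemma FG s t : Ff s (Gf s t) = t.
Proof. apply (F_inv X io io_dense); [apply Auto_Phi|apply Auto_Psi|apply Phi_Psi]. Qed.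

Definition rho (s : Q) : HomeoPlus :=
  mkH (Ff s) (Gf s) (GF s) (FG s)
    (fun a b => F_incr X io io_dense (Phi s) (Auto_Phi s) a b)
    (fun a b => F_incr X io io_dense (Psi s) (Auto_Psi s) a b)
    (F_cont X io io_dense (Phi s) (Auto_Phi s))
    (F_cont X io io_dense (Psi s) (Auto_Psi s)).

Lemma rho_hom r s : hp_fun (rho (op r s)) = conj_op (rho r) (rho s).
Proof.
  apply functional_extensionality. intros P. unfold conj_op, rho. rewrite !mkH_fun, !mkH_inv.
  rewrite !lift_comp. apply lift_ext. intros t. unfold Ff, Gf.
  rewrite (F_comp X io io_dense (Phi r) (Psi s) (Auto_Phi r) (Auto_Psi s)).
  rewrite (F_comp X io io_dense (Phi s)); [|apply Auto_Phi|apply Auto_comp; [apply Auto_Phi|apply Auto_Psi]].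
  f_equal. apply functional_extensionality. intros [p u]. unfold Phi, Psi. simpl.
  rewrite (phi_hom Q op c hQ hc b r s p). reflexivity.
Qed.

Lemma rho_inj r s : hp_fun (rho r) = hp_fun (rho s) -> forall y, op y r = op y s.
Proof.
  intros E y. unfold rho in E. rewrite !mkH_fun in E.
  set (x := ((0%Z, y), dD 0) : X).
  assert (H1 : Ff r (io x) = Ff s (io x)).
  { apply pt_inj. rewrite <- !lift_pt. rewrite E. reflexivity. }
  unfold Ff in H1. rewrite !(F_io X io io_dense) in H1 by apply Auto_Phi.
  apply io_inj in H1. unfold Phi, phi in H1. simpl in H1. congruence.
Qed.
End Final.

Theorem lemma3p3 (Q : Type) (op : Q -> Q -> Q) (c : Q -> Q -> Q -> Z)
  (hQ : is_quandle op) (hwl : weak_latin op) (hcount : countable Q)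
  (hc : circular_order op c) :
  exists rho : Q -> HomeoPlus,
    (forall r s, hp_fun (rho r) = hp_fun (rho s) -> r = s) /\
    (forall r s, hp_fun (rho (op r s)) = conj_op (rho r) (rho s)).
Proof.
  destruct (classic (inhabited Q)) as [[b]|NQ].
  - destruct hcount as [f Hf].
    set (eQ := fun n => epsilon (inhabits b) (fun q => f q = n)).
    assert (eQ_surj : forall q, exists n, eQ n = q).
    { intros q. exists (f q). apply Hf. unfold eQ. apply (epsilon_spec (inhabits b) (fun q' => f q' = f q)). eauto. }
    exists (rho Q op c hQ hc b eQ eQ_surj). split.
    + intros r s E. destruct (hwl r s) as [qh Hq]. apply Hq.
      apply (rho_inj Q op c hQ hc b eQ eQ_surj r s E qh).
    + intros r s. apply rho_hom.
  - exists (fun q => False_rect _ (NQ (inhabits q))). split; intros r; exfalso; apply NQ; exact (inhabits r).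
Qed.
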